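(* Let $\varepsilon>0$ and let $N\ge1$ be an integer; set $\delta(\varepsilon,N):=\varepsilon^4/(16N^8n^4)$. Let $\Lambda\in\mathbb{R}^{p\times p}$ be a connected discrete-time interconnection, $r\in\mathbb{R}^p$ with $r^T\Lambda=r^T$, $r^T\mathbf 1=1$, and $\Omega$ symmetric positive definite with $(\Lambda-\mathbf 1r^T)^T\Omega(\Lambda-\mathbf 1r^T)-\Omega=-I_p$. Let $\rho(\Lambda):=\sigma_{\max}(\Omega)\max\{1,|\Lambda-I_p|^2\}$ and $V(\mathbf x):=\mathbf x^T(\Omega\otimes I_n)\mathbf x$. Then for every $Q:\mathbb{N}\to\overline{\mathcal Q}_n$ with $\sigma_{\min}\big(\sum_{k=0}^{N-1}Q_k\big)\ge\varepsilon$, the solution of $\mathbf x^+=(I_{np}+(\Lambda-I_p)\otimes Q_k)\mathbf x$ satisfies $$V(\mathbf x(N)-\bar{\mathbf x})\le\Big(1-\frac{\delta(\varepsilon,N)}{\rho(\Lambda)}\Big)V(\mathbf x(0)-\bar{\mathbf x}),$$ where $\bar{\mathbf x}:=(\mathbf 1r^T\otimes I_n)\mathbf x(0)$.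
   Context: $|\cdot|$ Euclidean / induced 2-norm; $\mathbf 1$ all-ones vector; $\otimes$ Kronecker product; $\sigma_{\max},\sigma_{\min}$ largest/smallest singular value; $\overline{\mathcal Q}_n$ symmetric positive semidefinite $n\times n$ matrices $R$ with $|R|\le1$. Discrete-time interconnection: $\lambda_{ij}\ge0$, $\sum_j\lambda_{ij}=1$; graph edge $(n_i,n_j)$ iff $\lambda_{ij}>0$; connected if some node is reachable by a directed path from every other node. *)

(* Defs.v *)
From HB Require Import structures.
From mathcomp Require Import all_boot all_order all_algebra.
From mathcomp Require Import mxtens.
From mathcomp Require Import all_classical all_reals.
Set Implicit Arguments. Unset Strict Implicit. Unset Printing Implicit Defensive.
Import Order.TTheory GRing.Theory Num.Theory.
Local Open Scope classical_set_scope.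
Local Open Scope ring_scope.

Section Defs.
Variable R : realType.

Definition vnorm {m : nat} (x : 'cV[R]_m) : R := Num.sqrt (\sum_i (x i 0) ^+ 2).

(* induced 2-norm = largest singular value *)
Definition opnorm {m k : nat} (A : 'M[R]_(m, k)) : R :=
  sup [set vnorm (A *m x) | x in [set x : 'cV[R]_k | vnorm x = 1]].
Definition sigma_max {m k : nat} (A : 'M[R]_(m, k)) : R := opnorm A.
Definition sigma_min {m : nat} (A : 'M[R]_m) : R :=
  inf [set vnorm (A *m x) | x in [set x : 'cV[R]_m | vnorm x = 1]].

Definition qform {m : nat} (A : 'M[R]_m) (x : 'cV[R]_m) : R := (x^T *m A *m x) 0 0.

Definition symmetric {m : nat} (A : 'M[R]_m) : Prop := A^T = A.
Definition posdef {m : nat} (A : 'M[R]_m) : Prop :=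
  symmetric A /\ forall x : 'cV[R]_m, x != 0 -> 0 < qform A x.
Definition psd {m : nat} (A : 'M[R]_m) : Prop :=
  symmetric A /\ forall x : 'cV[R]_m, 0 <= qform A x.
Definition Qbar {m : nat} (A : 'M[R]_m) : Prop := psd A /\ opnorm A <= 1.

Definition ones (m : nat) : 'cV[R]_m := const_mx 1.

Definition interconnection {p : nat} (L : 'M[R]_p) : Prop :=
  (forall i j, 0 <= L i j) /\ (forall i, \sum_j L i j = 1).
Definition edge {p : nat} (L : 'M[R]_p) : rel 'I_p := fun i j => 0 < L i j.
Definition connected_ic {p : nat} (L : 'M[R]_p) : Prop :=
  interconnection L /\ exists k : 'I_p, forall i, connect (edge L) i k.

Fixpoint traj {p n : nat} (L : 'M[R]_p) (Q : nat -> 'M[R]_n)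
    (x0 : 'cV[R]_(p * n)) (k : nat) : 'cV[R]_(p * n) :=
  match k with
  | 0 => x0
  | k'.+1 => (1%:M + tensmx (L - 1%:M) (Q k')) *m traj L Q x0 k'
  end.

Definition Vfun {p n : nat} (Om : 'M[R]_p) (x : 'cV[R]_(p * n)) : R :=
  qform (tensmx Om (1%:M : 'M[R]_n)) x.

Definition delta (eps : R) (N n : nat) : R :=
  eps ^+ 4 / (16 * N%:R ^+ 8 * n%:R ^+ 4).

Definition rho {p : nat} (L Om : 'M[R]_p) : R :=
  sigma_max Om * Num.max 1 (opnorm (L - 1%:M) ^+ 2).

End Defs.

(* Main.v *)
Require Import Defs.
From HB Require Import structures.
From mathcomp Require Import all_boot all_order all_algebra.
From mathcomp Require Import mxtens.
From mathcomp Require Import all_classical all_reals.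
From mathcomp Require Import ring lra zify.
Set Implicit Arguments. Unset Strict Implicit. Unset Printing Implicit Defensive.
Import Order.TTheory GRing.Theory Num.Theory.
Local Open Scope ring_scope.
Section Aux.
Variable R : realType.

Definition dot {a b : nat} (X Y : 'M[R]_(a, b)) : R := \tr (X^T *m Y).

Lemma dotC {a b} (X Y : 'M[R]_(a,b)) : dot X Y = dot Y X.
Proof. by rewrite /dot -mxtrace_tr trmx_mul trmxK. Qed.

Lemma dotDr {a b} (X Y Z : 'M[R]_(a,b)) : dot X (Y + Z) = dot X Y + dot X Z.
Proof. by rewrite /dot mulmxDr mxtraceD. Qed.

Lemma dotZr {a b} c (X Y : 'M[R]_(a,b)) : dot X (c *: Y) = c * dot X Y.
Proof. by rewrite /dot -scalemxAr mxtraceZ. Qed.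

Lemma dotNr {a b} (X Y : 'M[R]_(a,b)) : dot X (- Y) = - dot X Y.
Proof. by rewrite -scaleN1r dotZr mulN1r. Qed.

Lemma dotBr {a b} (X Y Z : 'M[R]_(a,b)) : dot X (Y - Z) = dot X Y - dot X Z.
Proof. by rewrite dotDr dotNr. Qed.

Lemma dotDl {a b} (X Y Z : 'M[R]_(a,b)) : dot (Y + Z) X = dot Y X + dot Z X.
Proof. by rewrite dotC dotDr !(dotC X). Qed.

Lemma dotZl {a b} c (X Y : 'M[R]_(a,b)) : dot (c *: Y) X = c * dot Y X.
Proof. by rewrite dotC dotZr dotC. Qed.

Lemma dotNl {a b} (X Y : 'M[R]_(a,b)) : dot (- Y) X = - dot Y X.
Proof. by rewrite dotC dotNr dotC. Qed.

Lemma dotBl {a b} (X Y Z : 'M[R]_(a,b)) : dot (Y - Z) X = dot Y X - dot Z X.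
Proof. by rewrite dotDl dotNl. Qed.

Lemma dot0r {a b} (X : 'M[R]_(a,b)) : dot X 0 = 0.
Proof. by rewrite /dot mulmx0 linear0. Qed.

Lemma dot0l {a b} (X : 'M[R]_(a,b)) : dot 0 X = 0.
Proof. by rewrite dotC dot0r. Qed.

Lemma dot_sumr {a b} (X : 'M[R]_(a,b)) N (F : 'I_N -> 'M[R]_(a,b)) :
  dot X (\sum_(k < N) F k) = \sum_(k < N) dot X (F k).
Proof.
elim: N F => [|N IH] F; first by rewrite !big_ord0 dot0r.
by rewrite !big_ord_recr /= dotDr IH.
Qed.

Lemma dot_mull {a b c} (A : 'M[R]_(c,a)) (X : 'M[R]_(a,b)) Y :
  dot (A *m X) Y = dot X (A^T *m Y).
Proof. by rewrite /dot trmx_mul mulmxA. Qed.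

Lemma dot_mulr {a b c} (B : 'M[R]_(b,c)) (X : 'M[R]_(a,b)) Y :
  dot (X *m B) Y = dot X (Y *m B^T).
Proof. by rewrite /dot trmx_mul -mulmxA mxtrace_mulC mulmxA. Qed.

Lemma dotE {a b} (X Y : 'M[R]_(a,b)) : dot X Y = \sum_i \sum_j X i j * Y i j.
Proof.
rewrite /dot /mxtrace exchange_big /=; apply: eq_bigr => j _.
by rewrite mxE; apply: eq_bigr => i _; rewrite mxE.
Qed.

Lemma dot_ge0 {a b} (X : 'M[R]_(a,b)) : 0 <= dot X X.
Proof. by rewrite dotE; apply: sumr_ge0 => i _; apply: sumr_ge0 => j _; rewrite -expr2 sqr_ge0. Qed.

Lemma dot_eq0 {a b} (X : 'M[R]_(a,b)) : dot X X = 0 -> X = 0.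
Proof.
rewrite dotE => /eqP; rewrite psumr_eq0; last first.
  by move=> i _; apply: sumr_ge0 => j _; rewrite -expr2 sqr_ge0.
move=> /allP H; apply/matrixP => i j; rewrite mxE.
have /H/implyP/(_ isT) := mem_index_enum i.
rewrite psumr_eq0; last by move=> k _; rewrite -expr2 sqr_ge0.
move=> /allP /(_ j (mem_index_enum j)) /implyP /(_ isT).
by rewrite -expr2 sqrf_eq0 => /eqP.
Qed.

End Aux.
Section Aux2.
Variable R : realType.

Lemma discr (a b c : R) : 0 <= a -> (forall t, 0 <= a * t ^+ 2 + 2 * b * t + c) ->
  b ^+ 2 <= a * c.
Proof.
move=> a0 H; have [ae|an0] := eqVneq a 0.
  rewrite ae; move: H; rewrite ae => H.
  have [->|bn0] := eqVneq b 0; first by rewrite expr0n /= mul0r.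
  have := H (- (c + 1) / (2 * b)).
  move=> h; suff E : 0 * (- (c + 1) / (2 * b)) ^+ 2 + 2 * b * (- (c + 1) / (2 * b)) + c = -1.
    by move: h; rewrite E lerNr oppr0 ler10.
  by field; rewrite bn0.
have ap : 0 < a by rewrite lt_def an0.
have := H (- b / a).
rewrite -(ler_pM2l ap) mulr0 => h.
suff : a * (a * (- b / a) ^+ 2 + 2 * b * (- b / a) + c) = a * c - b ^+ 2.
  by move=> E; rewrite -subr_ge0 -E.
by field; rewrite an0.
Qed.

Lemma cs_form {a b : nat} (B : 'M[R]_(a,b) -> 'M[R]_(a,b) -> R) :
  (forall X Y, B X Y = B Y X) ->
  (forall c X Y Z, B (c *: X + Y) Z = c * B X Z + B Y Z) ->
  (forall X, 0 <= B X X) ->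
  forall X Y, B X Y ^+ 2 <= B X X * B Y Y.
Proof.
move=> Bs Bl Bp X Y; apply: discr => // t.
have := Bp (t *: X + Y); rewrite Bl Bs Bl (Bs Y (t *: X + Y)) Bl (Bs Y X).
by move=> h; apply: le_trans h _; rewrite le_eqVlt; apply/orP; left; apply/eqP; ring.
Qed.

Lemma tr11 (A : 'M[R]_1) : \tr A = A 0 0.
Proof. by rewrite /mxtrace big_ord1. Qed.

Lemma qform_dot {m} (A : 'M[R]_m) x : qform A x = dot x (A *m x).
Proof. by rewrite /qform /dot tr11 mulmxA. Qed.

Lemma vnorm2 {m} (x : 'cV[R]_m) : vnorm x ^+ 2 = dot x x.
Proof.
rewrite /vnorm sqr_sqrtr; last by apply: sumr_ge0 => i _; rewrite sqr_ge0.
by rewrite dotE; apply: eq_bigr => i _; rewrite big_ord1 expr2.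
Qed.

Lemma vnormE {m} (x : 'cV[R]_m) : vnorm x = Num.sqrt (dot x x).
Proof. by rewrite -vnorm2 sqrtr_sqr ger0_norm // sqrtr_ge0. Qed.

Lemma vnorm_ge0 {m} (x : 'cV[R]_m) : 0 <= vnorm x.
Proof. exact: sqrtr_ge0. Qed.

Lemma vnormZ {m} c (x : 'cV[R]_m) : vnorm (c *: x) = `|c| * vnorm x.
Proof. by rewrite !vnormE dotZl dotZr mulrA -expr2 sqrtrM ?sqr_ge0 // sqrtr_sqr. Qed.

Lemma vnorm0 {m} : vnorm (0 : 'cV[R]_m) = 0.
Proof. by rewrite vnormE dot0r sqrtr0. Qed.

Lemma vnorm_eq0 {m} (x : 'cV[R]_m) : vnorm x = 0 -> x = 0.
Proof.
move=> h; apply: dot_eq0; have := vnorm2 x; rewrite h expr0n /= => <-//.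
Qed.

End Aux2.
Section Aux3.
Variable R : realType.

Lemma sq_le (y s : R) : 0 <= s -> `|y| <= s -> y ^+ 2 <= s ^+ 2.
Proof.
move=> s0 h; rewrite -(ger0_norm (sqr_ge0 y)) normrX.
by apply: lerXn2r => //; rewrite ?nnegrE ?normr_ge0.
Qed.

Lemma unit_coord {k} (x : 'cV[R]_k) j : vnorm x = 1 -> `|x j 0| <= 1.
Proof.
move=> h.
have hs : \sum_i x i 0 ^+ 2 = 1.
  by move: h; rewrite /vnorm => h; rewrite -(sqr_sqrtr (a := \sum_i x i 0 ^+ 2)) ?h ?expr1n //; apply: sumr_ge0 => i _; rewrite sqr_ge0.
have h2 : x j 0 ^+ 2 <= 1.
  rewrite -hs (bigD1 j) //= lerDl.
  by apply: sumr_ge0 => i _; rewrite sqr_ge0.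
 have e : `|x j 0| ^+ 2 = x j 0 ^+ 2 by rewrite -normrX ger0_norm ?sqr_ge0.
have := normr_ge0 (x j 0); nra.
Qed.

Lemma opnorm_ub {m k} (A : 'M[R]_(m,k)) :
  has_ubound [set vnorm (A *m x) | x in [set x : 'cV[R]_k | vnorm x = 1]].
Proof.
exists (Num.sqrt (\sum_i (\sum_j `|A i j|) ^+ 2)).
move=> _ [x /= hx <-]; rewrite /vnorm ler_sqrt; last first.
  by apply: sumr_ge0 => i _; rewrite sqr_ge0.
apply: ler_sum => i _; apply: sq_le; first by apply: sumr_ge0 => j _.
rewrite mxE; apply: le_trans (ler_norm_sum _ _ _) _.
apply: ler_sum => j _; rewrite normrM.
by rewrite -{2}(mulr1 `|A i j|) ler_wpM2l ?normr_ge0 ?unit_coord.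
Qed.

Lemma opnorm_unit {m k} (A : 'M[R]_(m,k)) x : vnorm x = 1 -> vnorm (A *m x) <= opnorm A.
Proof. by move=> hx; apply: (ub_le_sup (opnorm_ub A)); exists x. Qed.

Lemma vnorm_gt0 {k} (x : 'cV[R]_k) : x != 0 -> 0 < vnorm x.
Proof.
move=> xn0; rewrite lt_def vnorm_ge0 andbT; apply/eqP => h.
by move/eqP: xn0; apply; apply: vnorm_eq0.
Qed.

Lemma opnorm_le {m k} (A : 'M[R]_(m,k)) x : vnorm (A *m x) <= opnorm A * vnorm x.
Proof.
have [->|xn0] := eqVneq x 0; first by rewrite mulmx0 !vnorm0 mulr0.
have xp := vnorm_gt0 xn0.
have hu : vnorm ((vnorm x)^-1 *: x) = 1.
  by rewrite vnormZ ger0_norm ?invr_ge0 ?vnorm_ge0 // mulVf // gt_eqF.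
have := opnorm_unit A hu; rewrite -scalemxAr vnormZ ger0_norm ?invr_ge0 ?vnorm_ge0 //.
by rewrite ler_pdivrMl // mulrC.
Qed.

Lemma unit_e0 {k} : vnorm (delta_mx (0 : 'I_k.+1) (0 : 'I_1) : 'cV[R]_k.+1) = 1.
Proof.
rewrite /vnorm (bigD1 0) //= big1 ?addr0 ?mxE ?eqxx ?expr1n ?sqrtr1 //.
by move=> i /negbTE hi; rewrite mxE hi /= expr0n.
Qed.

Lemma opnorm_ge0 {m k} (A : 'M[R]_(m,k.+1)) : 0 <= opnorm A.
Proof. exact: le_trans (vnorm_ge0 _) (opnorm_unit A unit_e0). Qed.

Lemma sigmin_unit {m} (A : 'M[R]_m) x : vnorm x = 1 -> sigma_min A <= vnorm (A *m x).
Proof.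
move=> hx; apply: (ge_inf _) => //; last by exists x.
by exists 0 => _ [y _ <-]; apply: vnorm_ge0.
Qed.

Lemma sigmin_le {m} (A : 'M[R]_m) x : sigma_min A * vnorm x <= vnorm (A *m x).
Proof.
have [->|xn0] := eqVneq x 0; first by rewrite mulmx0 !vnorm0 mulr0.
have xp := vnorm_gt0 xn0.
have hu : vnorm ((vnorm x)^-1 *: x) = 1.
  by rewrite vnormZ ger0_norm ?invr_ge0 ?vnorm_ge0 // mulVf // gt_eqF.
have := sigmin_unit A hu; rewrite -scalemxAr vnormZ ger0_norm ?invr_ge0 ?vnorm_ge0 //.
by rewrite ler_pdivlMl // mulrC.
Qed.

End Aux3.
Section Aux4.
Variable R : realType.

Definition psdf {m} (Q : 'M[R]_m) := forall v : 'cV[R]_m, 0 <= qform Q v.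

Lemma dot_rows {a b} (X : 'M[R]_(a,b)) (Q : 'M[R]_b) :
  dot X (X *m Q) = \sum_i qform Q (row i X)^T.
Proof.
rewrite dotE; apply: eq_bigr => i _.
rewrite /qform trmxK !mxE; apply: eq_bigr => j _.
rewrite !mxE mulrC; congr (_ * _); apply: eq_bigr => l _; rewrite !mxE //.
Qed.

Lemma psdf_dot {a b} (X : 'M[R]_(a,b)) (Q : 'M[R]_b) : psdf Q -> 0 <= dot X (X *m Q).
Proof. by move=> hQ; rewrite dot_rows; apply: sumr_ge0 => i _; apply: hQ. Qed.

Lemma cs_dot {a b} (X Y : 'M[R]_(a,b)) : dot X Y ^+ 2 <= dot X X * dot Y Y.
Proof.
apply: (cs_form (B := @dot R a b)) => //; first exact: dotC.
  by move=> c U V W; rewrite dotDl dotZl.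
exact: dot_ge0.
Qed.

Lemma symdot {m} (S : 'M[R]_m) (x y : 'cV[R]_m) : S^T = S ->
  dot x (S *m y) = dot y (S *m x).
Proof. by move=> hS; rewrite dotC dot_mull hS. Qed.

Lemma cs_sym {m} (S : 'M[R]_m) (x y : 'cV[R]_m) : S^T = S -> psdf S ->
  dot x (S *m y) ^+ 2 <= dot x (S *m x) * dot y (S *m y).
Proof.
move=> hS hp.
apply: (cs_form (B := fun x y : 'cV[R]_m => dot x (S *m y))).
- by move=> U V; apply: symdot.
- by move=> c U V W; rewrite dotDl dotZl.
- by move=> U; rewrite -qform_dot.
Qed.

Lemma sqle (x a : R) : 0 <= a -> x ^+ 2 <= a ^+ 2 -> x <= a.
Proof. move=> a0 h; nra. Qed.

Lemma Qbar_sym {m} (Q : 'M[R]_m) : Qbar Q -> Q^T = Q.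
Proof. by case=> [[]]. Qed.

Lemma Qbar_psdf {m} (Q : 'M[R]_m) : Qbar Q -> psdf Q.
Proof. by case=> [[]]. Qed.

Lemma Qbar_q1 {m} (Q : 'M[R]_m) (v : 'cV[R]_m) : Qbar Q -> dot (Q *m v) (Q *m v) <= dot v v.
Proof.
move=> hQ; rewrite -!vnorm2; apply: sq_le; first exact: vnorm_ge0.
rewrite ger0_norm ?vnorm_ge0 //; apply: le_trans (opnorm_le _ _) _.
by rewrite -{2}(mul1r (vnorm v)) ler_wpM2r ?vnorm_ge0 //; case: hQ.
Qed.

Lemma Qbar_q3 {m} (Q : 'M[R]_m) (v : 'cV[R]_m) : Qbar Q -> dot v (Q *m v) <= dot v v.
Proof.
move=> hQ; apply: sqle; first exact: dot_ge0.
apply: le_trans (cs_dot _ _) _; rewrite expr2.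
by apply: ler_wpM2l; [exact: dot_ge0 | exact: Qbar_q1].
Qed.

Lemma Qbar_q2 {m} (Q : 'M[R]_m) (v : 'cV[R]_m) : Qbar Q -> dot (Q *m v) (Q *m v) <= dot v (Q *m v).
Proof.
move=> hQ; have hS := Qbar_sym hQ; have hp := Qbar_psdf hQ.
set w := dot (Q *m v) (Q *m v).
have e : dot v (Q *m (Q *m v)) = w by rewrite /w -{1}hS -dot_mull.
have := cs_sym v (Q *m v) hS hp; rewrite e.
have h3 := Qbar_q3 (Q *m v) hQ; rewrite -/w in h3.
have q0 : 0 <= dot v (Q *m v) by rewrite -qform_dot.
have w0 : 0 <= w by apply: dot_ge0.
move=> h; have h' : w ^+ 2 <= dot v (Q *m v) * w.
  by apply: le_trans h _; apply: ler_wpM2l.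
have [->|wn0] := eqVneq w 0; first by [].
have wp : 0 < w by rewrite lt_def wn0.
by rewrite expr2 ler_pM2r // in h'.
Qed.

Lemma psdf_QQ {m} (Q : 'M[R]_m) : Qbar Q -> psdf (Q - Q *m Q).
Proof.
move=> hQ v; rewrite qform_dot mulmxBl dotBr subr_ge0 -mulmxA.
by rewrite -{1}(Qbar_sym hQ) -dot_mull; apply: Qbar_q2.
Qed.

Lemma psdf_1Q {m} (Q : 'M[R]_m) : Qbar Q -> psdf (1%:M - Q).
Proof.
by move=> hQ v; rewrite qform_dot mulmxBl dotBr subr_ge0 mul1mx; apply: Qbar_q3.
Qed.

End Aux4.
Section Aux5.
Variable R : realType.

Lemma dot_delta {m} (i : 'I_m) (Y : 'cV[R]_m) : dot (delta_mx i (0 : 'I_1)) Y = Y i 0.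
Proof. by rewrite /dot trmx_delta -rowE tr11 mxE. Qed.

Lemma dot_delta2 {m} (S : 'M[R]_m) (i j : 'I_m) :
  dot (delta_mx i (0 : 'I_1)) (S *m delta_mx j 0) = S i j.
Proof. by rewrite dot_delta -colE mxE. Qed.

Lemma psd_diag0 {m} (S : 'M[R]_m) (k j : 'I_m) : S^T = S -> psdf S -> S k k = 0 -> S k j = 0.
Proof.
move=> hS hp hk.
have := cs_sym (delta_mx k (0:'I_1)) (delta_mx j (0:'I_1)) hS hp.
rewrite !dot_delta2 hk mul0r => h.
by apply/eqP; rewrite -sqrf_eq0 eq_le h sqr_ge0.
Qed.

Lemma dot11 (X Y : 'M[R]_1) : dot X Y = X 0 0 * Y 0 0.
Proof. by rewrite dotE !big_ord1. Qed.

Lemma psd_func {m} (f : 'M[R]_m -> R) :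
  (forall A B, f (A + B) = f A + f B) -> (forall c A, f (c *: A) = c * f A) ->
  (forall b : 'cV[R]_m, 0 <= f (b *m b^T)) ->
  forall S, S^T = S -> psdf S -> 0 <= f S.
Proof.
move=> fD fZ fb.
have f0 : f 0 = 0 by rewrite -(scale0r (0 : 'M[R]_m)) fZ mul0r.
suff H : forall d S, S^T = S -> psdf S ->
    (forall i j : 'I_m, (i < m - d)%N -> S i j = 0) -> 0 <= f S.
  by move=> S hS hp; apply: (H m) => // i j; rewrite subnn.
elim=> [|d IH] S hS hp hz.
  have -> : S = 0 by apply/matrixP => i j; rewrite mxE hz // subn0.
  by rewrite f0.
have [le_md|lt_dm] := leqP m d.
  apply: IH => // i j; have -> : (m - d = 0)%N by lia.
  by rewrite ltn0.
set k := (m - d.+1)%N.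
have km : (k < m)%N by rewrite /k; lia.
set kk := Ordinal km.
have hSji : forall i j, S j i = S i j.
  by move=> i j; rewrite -{1}hS mxE.
have [hk0|hkn] := eqVneq (S kk kk) 0.
  apply: IH => // i j hi.
  have [ik|ik] := ltnP i k; first by apply: hz.
  have -> : i = kk by apply/val_inj => /=; rewrite /k in ik *; lia.
  exact: psd_diag0.
have hkp : 0 < S kk kk.
  rewrite lt_def hkn /=; have := hp (delta_mx kk 0).
  by rewrite qform_dot dot_delta2.
set b := col kk S.
set c := (S kk kk)^-1.
set S' := S - c *: (b *m b^T).
have eS : S = S' + c *: (b *m b^T) by rewrite /S' subrK.
rewrite eS fD fZ; apply: addr_ge0; last by apply: mulr_ge0 => //; rewrite invr_ge0 ltW.
apply: IH.
- by rewrite /S' linearB /= linearZ /= trmx_mul trmxK hS.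
- move=> v; rewrite qform_dot /S' mulmxBl dotBr -scalemxAl dotZr -mulmxA.
  rewrite -(trmxK b) -dot_mull trmxK dot11.
  have eb : (b^T *m v) 0 0 = dot (delta_mx kk 0) (S *m v).
    rewrite dot_delta !mxE; apply: eq_bigr => l _; rewrite !mxE hSji //.
  rewrite eb -expr2 subr_ge0.
  have := cs_sym (delta_mx kk 0) v hS hp; rewrite dot_delta2 -/c => h.
  rewrite -(ler_pM2l hkp) mulrA mulrV ?unitfE // mul1r; apply: le_trans h _.
  done.
- move=> i j hi; rewrite /S' !mxE big_ord1 !mxE.
  have [ik|ik] := ltnP i k.
    by rewrite (hz i j) // (hz i kk) //; ring.
  have -> : i = kk by apply/val_inj => /=; rewrite /k in ik *; lia.
  by rewrite mulrA /c mulVf // mul1r hSji subrr.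
Qed.

End Aux5.
Section Aux6.
Variable R : realType.

Definition unvec {p n} (x : 'cV[R]_(p * n)) : 'M[R]_(p, n) :=
  \matrix_(i, j) x (mxtens_index (i, j)) 0.

Lemma sum_tens {p n} (F : 'I_(p * n) -> R) :
  \sum_k F k = \sum_i \sum_j F (mxtens_index (i, j)).
Proof.
rewrite (reindex (@mxtens_index p n)) /=; last first.
  by exists (@mxtens_unindex p n) => k _; [apply: mxtens_indexK | apply: mxtens_unindexK].
by rewrite pair_big /=; apply: eq_bigr => [[i j]] _.
Qed.

Lemma unvec_mul {p n} (A : 'M[R]_p) (B : 'M[R]_n) x :
  unvec ((A *t B) *m x) = A *m unvec x *m B^T.
Proof.
apply/matrixP => i j; rewrite !mxE sum_tens.
under eq_bigr do under eq_bigr do rewrite tensmxE.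
rewrite exchange_big /=; apply: eq_bigr => b _.
rewrite !mxE big_distrl /=; apply: eq_bigr => a _.
by rewrite !mxE mulrAC.
Qed.

Lemma unvecD {p n} (x y : 'cV[R]_(p * n)) : unvec (x + y) = unvec x + unvec y.
Proof. by apply/matrixP => i j; rewrite !mxE. Qed.

Lemma unvecB {p n} (x y : 'cV[R]_(p * n)) : unvec (x - y) = unvec x - unvec y.
Proof. by apply/matrixP => i j; rewrite !mxE. Qed.

Lemma qform_unvec {p n} (M : 'M[R]_(p * n)) x :
  qform M x = dot (unvec x) (unvec (M *m x)).
Proof.
rewrite qform_dot !dotE sum_tens; apply: eq_bigr => i _; apply: eq_bigr => j _.
by rewrite big_ord1 !mxE.
Qed.

Lemma Vfun_unvec {p n} (Om : 'M[R]_p) (x : 'cV[R]_(p * n)) :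
  Vfun Om x = dot (unvec x) (Om *m unvec x).
Proof. by rewrite /Vfun qform_unvec unvec_mul trmx1 mulmx1. Qed.

End Aux6.
Section Aux7.
Variable R : realType.

Lemma zmod_id {p} (a b c d e : 'M[R]_p) : a - d = - e ->
  (c - d) + (b - d) = - (a - b - (c - d)) - e.
Proof.
move=> /matrixP h; apply/matrixP => i j; have := h i j; rewrite !mxE => h'.
lra.
Qed.

Lemma lyap_H {p} (G Om : 'M[R]_p) : G^T *m Om *m G - Om = - 1%:M ->
  Om *m (G - 1%:M) + (G - 1%:M)^T *m Om =
  - ((G - 1%:M)^T *m Om *m (G - 1%:M)) - 1%:M.
Proof.
move=> hL; rewrite ![(G - 1%:M)^T]linearB /= trmx1.
rewrite ?mulmxBl ?mulmxBr ?mul1mx ?mulmx1 ?mulmxBl ?mul1mx.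
exact: zmod_id.
Qed.

Lemma step_id {p n} (Om H : 'M[R]_p) (Q : 'M[R]_n) (E : 'M[R]_(p,n)) :
  Om^T = Om -> Q^T = Q ->
  Om *m H + H^T *m Om = - (H^T *m Om *m H) - 1%:M ->
  dot (E + H *m E *m Q) (Om *m (E + H *m E *m Q)) =
  dot E (Om *m E) - dot E (H^T *m Om *m H *m E *m (Q - Q *m Q)) - dot E (E *m Q).
Proof.
move=> hOm hQ hL.
have a12 : dot E (Om *m (H *m E *m Q)) = dot (H *m E *m Q) (Om *m E).
  by rewrite [RHS]dotC dot_mull hOm.
have a2 : dot (H *m E *m Q) (Om *m E) = dot E (H^T *m Om *m E *m Q).
  by rewrite dot_mulr dot_mull hQ !mulmxA.
have a3 : dot (H *m E *m Q) (Om *m (H *m E *m Q)) =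
          dot E (H^T *m Om *m H *m E *m Q *m Q).
  by rewrite dot_mulr dot_mull hQ !mulmxA.
have a1 : dot E (Om *m (H *m E *m Q)) = dot E (Om *m H *m E *m Q).
  by rewrite !mulmxA.
have e1 : dot E (Om *m H *m E *m Q) + dot E (H^T *m Om *m E *m Q) =
          dot E ((- (H^T *m Om *m H) - 1%:M) *m E *m Q).
  by rewrite -hL -dotDr -!mulmxDl.
have e2 : dot E ((- (H^T *m Om *m H) - 1%:M) *m E *m Q) =
          - dot E (H^T *m Om *m H *m E *m Q) - dot E (E *m Q).
  by rewrite mulmxBl mulNmx mul1mx mulmxBl mulNmx dotBr dotNr.
have e3 : dot E (H^T *m Om *m H *m E *m (Q - Q *m Q)) =
          dot E (H^T *m Om *m H *m E *m Q) - dot E (H^T *m Om *m H *m E *m Q *m Q).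
  by rewrite mulmxBr dotBr mulmxA.
rewrite mulmxDr !dotDl !dotDr a3 e3.
have := a1; rewrite a12 a2 => a1'.
move: e1 e2; rewrite -a1' => e1 e2.
lra.
Qed.

End Aux7.
Section Aux8.
Variable R : realType.

Lemma dot_sq_sum {a b} k (Y : nat -> 'M[R]_(a,b)) :
  dot (\sum_(j < k) Y j) (\sum_(j < k) Y j) <= k%:R * \sum_(j < k) dot (Y j) (Y j).
Proof.
elim: k => [|k IH]; first by rewrite !big_ord0 dot0r mul0r.
rewrite !big_ord_recr /=; set A := \sum_(j < k) Y j; set y := Y k.
have hc : 2 * dot A y <= \sum_(j < k) dot (Y j) (Y j) + k%:R * dot y y.
  have -> : k%:R * dot y y = \sum_(j < k) dot y y by rewrite sumr_const card_ord mulr_natl.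
  rewrite /A dotC dot_sumr mulr_sumr -big_split /=.
  apply: ler_sum => j _; rewrite dotC.
  have := dot_ge0 (Y j - y); rewrite dotBl !dotBr (dotC y (Y j)); lra.
rewrite dotDl !dotDr (dotC y A) -/A; move: hc IH.
rewrite -/A -addn1 natrD => hc IH.
have := dot_ge0 y; lra.
Qed.

Lemma dot_para {a b} (X Y : 'M[R]_(a,b)) (Q : 'M[R]_b) : psdf Q ->
  dot (X + Y) ((X + Y) *m Q) <= 2 * dot X (X *m Q) + 2 * dot Y (Y *m Q).
Proof.
move=> hQ; have := psdf_dot (X - Y) hQ.
rewrite ?mulmxDl ?mulmxBl ?mulNmx ?dotDl ?dotBl ?dotNl ?dotDr ?dotBr ?dotNr; lra.
Qed.

Lemma dot_cols {a b} (X Y : 'M[R]_(a,b)) : dot X Y = \sum_j dot (col j X) (col j Y).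
Proof.
rewrite dotE exchange_big /=; apply: eq_bigr => j _.
rewrite dotE; apply: eq_bigr => i _; by rewrite big_ord1 !mxE.
Qed.

Lemma opnorm_ge0' {m k} (A : 'M[R]_(m,k)) : (0 < k)%N -> 0 <= opnorm A.
Proof. by case: k A => // k A _; apply: opnorm_ge0. Qed.

Lemma dot_op {a b c} (A : 'M[R]_(c,a)) (X : 'M[R]_(a,b)) :
  dot (A *m X) (A *m X) <= opnorm A ^+ 2 * dot X X.
Proof.
rewrite !(dot_cols (A *m X)) dot_cols mulr_sumr; apply: ler_sum => j _.
have -> : col j (A *m X) = A *m col j X by rewrite !colE mulmxA.
rewrite -!vnorm2 -exprMn; apply: sq_le.
  exact: le_trans (vnorm_ge0 _) (opnorm_le _ _).
by rewrite ger0_norm ?vnorm_ge0 // opnorm_le.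
Qed.

Lemma dot_Q1 {a b} (X : 'M[R]_(a,b)) Q : Qbar Q -> dot X (X *m Q) <= dot X X.
Proof.
move=> hQ; have := psdf_dot X (psdf_1Q hQ).
by rewrite mulmxBr mulmx1 dotBr subr_ge0.
Qed.

Lemma dot_Q2 {a b} (X : 'M[R]_(a,b)) Q : Qbar Q ->
  dot (X *m Q) (X *m Q) <= dot X (X *m Q).
Proof.
move=> hQ; have := psdf_dot X (psdf_QQ hQ).
by rewrite mulmxBr dotBr subr_ge0 dot_mulr (Qbar_sym hQ) mulmxA.
Qed.

Lemma dot_Om {a b} (Om : 'M[R]_a) (X : 'M[R]_(a,b)) : (0 < a)%N ->
  dot X (Om *m X) <= opnorm Om * dot X X.
Proof.
move=> a0; have s0 := opnorm_ge0' Om a0.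
apply: sqle; first by apply: mulr_ge0 => //; apply: dot_ge0.
apply: le_trans (cs_dot _ _) _.
have := dot_op Om X; have := dot_ge0 X; nra.
Qed.

End Aux8.
Section Aux9.
Variable R : realType.

Lemma dotA_sum {n N} (Q : nat -> 'M[R]_n) (v : 'cV[R]_n) :
  dot v ((\sum_(k < N) Q k) *m v) = \sum_(k < N) dot v (Q k *m v).
Proof. by rewrite mulmx_suml dot_sumr. Qed.

Lemma eps_vec {n N} (Q : nat -> 'M[R]_n) (eps : R) (v : 'cV[R]_n) :
  (forall k, Qbar (Q k)) -> 0 < eps -> eps <= sigma_min (\sum_(k < N) Q k) ->
  eps ^+ 2 * dot v v <= N%:R * dot v ((\sum_(k < N) Q k) *m v).
Proof.
move=> hQ he hs; set A := \sum_(k < N) Q k.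
have h1 : eps * vnorm v <= vnorm (A *m v).
  apply: le_trans (sigmin_le A v); by rewrite ler_wpM2r ?vnorm_ge0.
have h2 : eps ^+ 2 * dot v v <= dot (A *m v) (A *m v).
  rewrite -!vnorm2 -exprMn; apply: sq_le; first exact: vnorm_ge0.
  by rewrite ger0_norm // mulr_ge0 ?vnorm_ge0 // ltW.
apply: le_trans h2 _.
have e : dot v (A *m v) = \sum_(k < N) dot v (Q k *m v) by rewrite dotA_sum.
have e2 : A *m v = \sum_(k < N) Q k *m v by rewrite mulmx_suml.
rewrite e e2.
apply: le_trans (dot_sq_sum N (fun k => Q k *m v)) _.
rewrite ler_wpM2l ?ler0n //; apply: ler_sum => k _; exact: Qbar_q2.
Qed.

Lemma eps_mat {p n N} (Q : nat -> 'M[R]_n) (eps : R) (X : 'M[R]_(p, n)) :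
  (forall k, Qbar (Q k)) -> 0 < eps -> eps <= sigma_min (\sum_(k < N) Q k) ->
  eps ^+ 2 * dot X X <= N%:R * dot X (X *m \sum_(k < N) Q k).
Proof.
move=> hQ he hs; have -> : dot X X = dot X (X *m 1%:M) by rewrite mulmx1.
rewrite !dot_rows !mulr_sumr; apply: ler_sum => i _.
rewrite !qform_dot mul1mx; exact: eps_vec.
Qed.

Lemma eps_leN {n N} (Q : nat -> 'M[R]_n) (eps : R) : (0 < n)%N ->
  (forall k, Qbar (Q k)) -> 0 < eps -> eps <= sigma_min (\sum_(k < N) Q k) ->
  eps ^+ 2 <= N%:R ^+ 2.
Proof.
case: n Q => // n Q _ hQ he hs.
set v : 'cV[R]_n.+1 := delta_mx 0 0.
have v1 : dot v v = 1 by rewrite -vnorm2 unit_e0 expr1n.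
have := eps_vec v hQ he hs; rewrite v1 mulr1 dotA_sum => h.
apply: le_trans h _; rewrite expr2 ler_wpM2l ?ler0n //.
have -> : N%:R = \sum_(k < N) (1 : R) by rewrite sumr_const card_ord.
by apply: ler_sum => k _; rewrite -v1; apply: Qbar_q3.
Qed.

End Aux9.
Section Aux10.
Variable R : realType.

Lemma delta_le (eps : R) (N n : nat) : 0 < eps -> (1 <= N)%N -> (1 <= n)%N ->
  eps ^+ 2 <= N%:R ^+ 2 -> delta eps N n * (4 * N%:R ^+ 3) <= eps ^+ 2.
Proof.
move=> he hN hn hle; rewrite /delta.
have N1 : 1 <= (N%:R : R) by rewrite ler1n.
have n1 : 1 <= (n%:R : R) by rewrite ler1n.
have n4 : 1 <= (n%:R : R) ^+ 4 by rewrite exprn_ege1.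
have N3 : 1 <= (N%:R : R) ^+ 3 by rewrite exprn_ege1.
have D0 : 0 < 16 * N%:R ^+ 8 * (n%:R : R) ^+ 4.
  have Np : 0 < (N%:R : R) by rewrite ltr0n.
  have np : 0 < (n%:R : R) by rewrite ltr0n.
  by rewrite !mulr_gt0 ?exprn_gt0.
rewrite mulrAC ler_pdivrMr //.
have e8 : (N%:R : R) ^+ 8 = N%:R ^+ 2 * N%:R ^+ 3 * N%:R ^+ 3 by rewrite -!exprD.
have e4 : eps ^+ 4 = eps ^+ 2 * eps ^+ 2 by rewrite -exprD.
rewrite e8 e4.
set a := eps ^+ 2 in hle *; set b := (N%:R : R) ^+ 2 in hle *; set c := (N%:R : R) ^+ 3 in N3 *; set d := (n%:R : R) ^+ 4 in n4 *.
have a0 : 0 <= a by rewrite sqr_ge0.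
have c0 : 0 <= c by apply: le_trans N3; rewrite ler01.
have b0 : 0 <= b by rewrite sqr_ge0.
have cd : 4 <= 16 * c * d by nra.
have h : a * (4 * c) <= 16 * (b * c * c) * d.
  have h1 : a * (4 * c) <= b * (4 * c) by rewrite ler_wpM2r // mulr_ge0.
  apply: le_trans h1 _.
  have bc0 : 0 <= b * c by rewrite mulr_ge0.
  nra.
have h' : a * (4 * c) <= 16 * (b * c * c * d) by move: h; rewrite !mulrA.
nra.
Qed.

Lemma final_arith (eps sig ell S V0 VN e : R) (N n : nat) :
  0 < eps -> (1 <= N)%N -> (1 <= n)%N -> eps ^+ 2 <= N%:R ^+ 2 ->
  VN <= V0 - S -> 0 <= S -> 0 <= V0 -> 0 <= e -> 0 <= sig -> V0 <= sig * e ->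
  eps ^+ 2 * e <= N%:R * (2 * S + N%:R * (2 * N%:R * ell ^+ 2 * S)) ->
  VN <= (1 - delta eps N n / (sig * Num.max 1 (ell ^+ 2))) * V0.
Proof.
move=> he hN hn hle hVN hS hV0 he0 hs hV0e hbig.
have hd := delta_le he hN hn hle.
have d0 : 0 <= delta eps N n.
  rewrite /delta; apply: divr_ge0; first by rewrite exprn_ge0 // ltW.
  by rewrite !mulr_ge0 ?exprn_ge0 ?ler0n.
set M := Num.max 1 (ell ^+ 2).
have M1 : 1 <= M by rewrite le_max lexx.
have Ml : ell ^+ 2 <= M by rewrite le_max lexx orbT.
have [s0|sp] := eqVneq sig 0.
  have V00 : V0 = 0 by apply/eqP; rewrite eq_le hV0 andbT; move: hV0e; rewrite s0 mul0r.
  by rewrite V00 mulr0; lra.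
have sgt : 0 < sig by rewrite lt_def sp.
have Mp : 0 < M by apply: lt_le_trans M1.
suff : delta eps N n / (sig * M) * V0 <= S.
  by move=> h; rewrite mulrBl mul1r; lra.
have h1 : delta eps N n / (sig * M) * V0 <= delta eps N n / (sig * M) * (sig * e).
  by rewrite ler_wpM2l // divr_ge0 // mulr_ge0 // ltW.
apply: le_trans h1 _.
have -> : delta eps N n / (sig * M) * (sig * e) = delta eps N n * e / M.
  by field; rewrite sp /= gt_eqF.
rewrite ler_pdivrMr //.
set Nr := (N%:R : R).
have N1 : 1 <= Nr by rewrite ler1n.
have N3 : 1 <= Nr ^+ 3 by rewrite exprn_ege1.
have N2 : 1 <= Nr ^+ 2 by rewrite exprn_ege1.
have hbig' : eps ^+ 2 * e <= 4 * Nr ^+ 3 * (S * M).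
  apply: le_trans hbig _.
  have e3 : Nr ^+ 3 = Nr * Nr ^+ 2 by rewrite exprS.
  have e2 : Nr ^+ 2 = Nr * Nr by rewrite expr2.
  rewrite e3 e2 in N3 N2 *.
  set l := ell ^+ 2 in Ml *.
  have l0 : 0 <= l by rewrite sqr_ge0.
  have hSM : S <= S * M by rewrite -{1}(mulr1 S) ler_wpM2l.
  have hSl : S * l <= S * M by rewrite ler_wpM2l.
  have N0 : 0 <= Nr by apply: le_trans N1; rewrite ler01.
  set T := Nr * (Nr * Nr) in N3 *.
  have T0 : 0 <= T by apply: le_trans N3; rewrite ler01.
  have NT : Nr <= T by rewrite /T -{1}(mulr1 Nr) ler_wpM2l // -e2.
  have x1 : Nr * S <= T * (S * M).
    apply: le_trans (_ : T * S <= _); first by rewrite ler_wpM2r.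
    by rewrite ler_wpM2l.
  have x2 : T * (S * l) <= T * (S * M) by rewrite ler_wpM2l.
  have -> : Nr * (2 * S + Nr * (2 * Nr * l * S)) = 2 * (Nr * S) + 2 * (T * (S * l)).
    by rewrite /T; ring.
  have -> : 4 * T * (S * M) = 2 * (T * (S * M)) + 2 * (T * (S * M)) by ring.
  lra.
have : delta eps N n * e * (4 * Nr ^+ 3) <= 4 * Nr ^+ 3 * (S * M).
  apply: le_trans hbig'; rewrite mulrAC; apply: ler_wpM2r => //.
have P : 0 < 4 * Nr ^+ 3 by rewrite mulr_gt0 // (lt_le_trans ltr01 N3).
by rewrite [X in _ <= X]mulrC ler_pM2r.
Qed.

End Aux10.
Section Aux11.
Variable R : realType.

Lemma psum_le (f : nat -> R) k N : (k <= N)%N -> (forall j, 0 <= f j) ->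
  \sum_(j < k) f j <= \sum_(j < N) f j.
Proof.
move=> hk h0; rewrite -!(big_mkord xpredT) (big_cat_nat (leq0n k) hk) /= lerDl.
by apply: sumr_ge0 => j _.
Qed.

Lemma col_mulmx {a b c} (A : 'M[R]_(c,a)) (X : 'M[R]_(a,b)) j :
  col j (A *m X) = A *m col j X.
Proof. by rewrite !colE mulmxA. Qed.

Lemma dot_Om_ge0 {a b} (Om : 'M[R]_a) (X : 'M[R]_(a,b)) : psdf Om -> 0 <= dot X (Om *m X).
Proof.
move=> hO; rewrite dot_cols; apply: sumr_ge0 => j _.
by rewrite col_mulmx -qform_dot.
Qed.

Lemma main_mx {p n N : nat} (eps : R) (L Om : 'M[R]_p) (r : 'cV[R]_p)
  (Q : nat -> 'M[R]_n) (E : nat -> 'M[R]_(p,n)) :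
  0 < eps -> (1 <= N)%N -> (1 <= n)%N -> (0 < p)%N ->
  Om^T = Om -> psdf Om ->
  (L - ones R p *m r^T)^T *m Om *m (L - ones R p *m r^T) - Om = - 1%:M ->
  (forall k, Qbar (Q k)) -> eps <= sigma_min (\sum_(k < N) Q k) ->
  (forall k, r^T *m E k = 0) ->
  (forall k, E k.+1 = E k + (L - 1%:M) *m E k *m Q k) ->
  dot (E N) (Om *m E N) <= (1 - delta eps N n / rho L Om) * dot (E 0) (Om *m E 0).
Proof.
move=> he hN hn hp hOs hOp hly hQ hsig hr hE.
set F := L - 1%:M.
set G := L - ones R p *m r^T.
set H := G - 1%:M.
have hFH : forall k, F *m E k = H *m E k.
  move=> k; rewrite /H /G /F !mulmxBl mul1mx -mulmxA (hr k) mulmx0 subr0.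
  by [].
have hlyH := lyap_H hly; rewrite -/H in hlyH.
set s := fun k => dot (E k) (E k *m Q k).
have s0 : forall k, 0 <= s k by move=> k; apply: psdf_dot; apply: Qbar_psdf.
have step : forall k, dot (E k.+1) (Om *m E k.+1) <= dot (E k) (Om *m E k) - s k.
  move=> k; rewrite hE (hFH k) step_id //; last exact: Qbar_sym.
  rewrite -/(s k); suff : 0 <= dot (E k) (H^T *m Om *m H *m E k *m (Q k - Q k *m Q k)).
    by move=> h; lra.
  apply: (psd_func (f := fun S => dot (E k) (H^T *m Om *m H *m E k *m S))).
  - by move=> A B; rewrite mulmxDr dotDr.
  - by move=> c A; rewrite -scalemxAr dotZr.
  - move=> b; rewrite mulmxA -dot_mulr -!mulmxA -dot_mull -qform_dot; exact: hOp.
  - by rewrite linearB /= trmx_mul (Qbar_sym (hQ k)).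
  - exact: psdf_QQ.
have Vdec : forall k, dot (E k) (Om *m E k) <= dot (E 0) (Om *m E 0) - \sum_(j < k) s j.
  elim=> [|k IH]; first by rewrite big_ord0 subr0.
  rewrite big_ord_recr /=; apply: le_trans (step k) _; lra.
have Ediff : forall k, E k - E 0 = \sum_(j < k) F *m E j *m Q j.
  elim=> [|k IH]; first by rewrite big_ord0 subrr.
  by rewrite big_ord_recr /= -IH hE addrAC.
set S := \sum_(j < N) s j.
have S0 : 0 <= S by apply: sumr_ge0 => j _.
set ell := opnorm F.
have hD : forall k, (k <= N)%N -> dot (E 0 - E k) (E 0 - E k) <= N%:R * (ell ^+ 2 * S).
  move=> k hk; rewrite -opprB dotNl dotNr opprK Ediff.
  apply: le_trans (dot_sq_sum k (fun j => F *m E j *m Q j)) _.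
  have h1 : \sum_(j < k) dot (F *m E j *m Q j) (F *m E j *m Q j) <= ell ^+ 2 * S.
    apply: le_trans (_ : \sum_(j < k) ell ^+ 2 * s j <= _).
      apply: ler_sum => j _; rewrite -mulmxA.
      apply: le_trans (dot_op _ _) _; rewrite ler_wpM2l ?sqr_ge0 //.
      exact: dot_Q2.
    rewrite -mulr_sumr ler_wpM2l ?sqr_ge0 //; exact: psum_le.
  have h2 : 0 <= \sum_(j < k) dot (F *m E j *m Q j) (F *m E j *m Q j).
    by apply: sumr_ge0 => j _; apply: dot_ge0.
  have kN : (k%:R : R) <= N%:R by rewrite ler_nat.
  have k0 : 0 <= (k%:R : R) by rewrite ler0n.
  have l0 : 0 <= ell ^+ 2 * S by rewrite mulr_ge0 ?sqr_ge0.
  nra.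
have hk : forall k, (k < N)%N -> dot (E 0) (E 0 *m Q k) <= 2 * s k + 2 * (N%:R * (ell ^+ 2 * S)).
  move=> k hkN.
  have e : E 0 = E k + (E 0 - E k) by rewrite addrC subrK.
  rewrite [in X in X <= _]e.
  apply: le_trans (dot_para _ _ (Qbar_psdf (hQ k))) _.
  rewrite -/(s k); have := hD k (ltnW hkN); have := dot_Q1 (E 0 - E k) (hQ k); lra.
have hsum : dot (E 0) (E 0 *m \sum_(k < N) Q k) <=
            2 * S + N%:R * (2 * (N%:R * (ell ^+ 2 * S))).
  rewrite mulmx_sumr dot_sumr.
  apply: le_trans (_ : \sum_(k < N) (2 * s k + 2 * (N%:R * (ell ^+ 2 * S))) <= _).
    by apply: ler_sum => k _; apply: hk.
  rewrite big_split /= -mulr_sumr sumr_const card_ord -/S -[_ *+ N]mulr_natl; lra.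
have heps := eps_mat (E 0) hQ he hsig.
rewrite /rho /sigma_max -/F -/ell.
apply: (final_arith (e := dot (E 0) (E 0)) he hN hn (eps_leN hn hQ he hsig) (Vdec N) S0).
- exact: dot_Om_ge0.
- exact: dot_ge0.
- exact: opnorm_ge0'.
- exact: dot_Om.
- apply: le_trans heps _; rewrite ler_wpM2l ?ler0n //.
  apply: le_trans hsum _; rewrite -/S.
  suff -> : N%:R * (2 * N%:R * ell ^+ 2 * S) = N%:R * (2 * (N%:R * (ell ^+ 2 * S))) by [].
  ring.
Qed.

End Aux11.
Lemma dot_b0 (R : realType) a b (X Y : 'M[R]_(a,b)) : b = 0%N -> dot X Y = 0.
Proof.
move=> hb; rewrite dotE big1 // => i _; rewrite big1 // => j _.
by exfalso; have := ltn_ord j; move: (nat_of_ord j) => k; rewrite hb.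
Qed.

Unset Implicit Arguments.

Theorem theorem11 (R : realType) (n p N : nat) (eps : R)
  (L : 'M[R]_p) (r : 'cV[R]_p) (Om : 'M[R]_p) :
  0 < eps -> (1 <= N)%N ->
  connected_ic L ->
  r^T *m L = r^T -> r^T *m ones R p = 1%:M ->
  posdef Om ->
  (L - ones R p *m r^T)^T *m Om *m (L - ones R p *m r^T) - Om = - 1%:M ->
  forall Q : nat -> 'M[R]_n,
    (forall k, Qbar (Q k)) ->
    eps <= sigma_min (\sum_(k < N) Q k) ->
    forall x0 : 'cV[R]_(p * n),
      let xbar := tensmx (ones R p *m r^T) (1%:M : 'M[R]_n) *m x0 in
      Vfun Om (traj L Q x0 N - xbar)
        <= (1 - delta eps N n / rho L Om) * Vfun Om (x0 - xbar).
Proof.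
move=> he hN [[_ hrow] _] hrL hr1 [hOs hOpd] hly Q hQ hsig x0.
cbv zeta; set xbar := (tensmx (ones R p *m r^T) (1%:M : 'M[R]_n) *m x0).
have hOp : psdf Om.
  move=> v; have [->|vn0] := eqVneq v 0; last exact: ltW (hOpd v vn0).
  by rewrite qform_dot mulmx0 dot0r.
have hp : (0 < p)%N.
  move: hr1; clear; case: p r => // r.
  move/matrixP => /(_ 0 0); rewrite !mxE big_ord0 => /eqP.
  by rewrite eq_sym oner_eq0.
have [n0|hn] := eqVneq n 0%N.
  by rewrite !Vfun_unvec !dot_b0 ?mulr0.
have hn1 : (1 <= n)%N by rewrite lt0n.
set J := ones R p *m r^T.
set F := L - 1%:M.
have hLone : L *m ones R p = ones R p.
  by apply/matrixP => i j; rewrite !mxE -[RHS](hrow i); apply: eq_bigr => k _; rewrite !mxE mulr1.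
have hFJ : F *m J = 0 by rewrite /F /J mulmxA mulmxBl hLone mul1mx subrr mul0mx.
have hrF : r^T *m F = 0 by rewrite /F mulmxBr hrL mulmx1 subrr.
set X0 := unvec x0.
have hxbar : unvec xbar = J *m X0 by rewrite /xbar unvec_mul trmx1 mulmx1.
set E := fun k => unvec (traj L Q x0 k - xbar).
have hE : forall k, E k.+1 = E k + F *m E k *m Q k.
  move=> k; rewrite /E /= mulmxDl mul1mx !unvecB unvecD unvec_mul (Qbar_sym (hQ k)).
  rewrite -/F hxbar.
  have e : F *m (unvec (traj L Q x0 k) - J *m X0) = F *m unvec (traj L Q x0 k).
    by rewrite mulmxBr mulmxA hFJ mul0mx subr0.
  by rewrite e addrAC.
have hrE : forall k, r^T *m E k = 0.
  elim=> [|k IH].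
    by rewrite /E /= unvecB hxbar -/X0 mulmxBr /J !mulmxA hr1 mul1mx subrr.
  by rewrite hE mulmxDr IH add0r !mulmxA hrF !mul0mx.
rewrite !Vfun_unvec.
have -> : unvec (traj L Q x0 N - xbar) = E N by [].
have -> : unvec (x0 - xbar) = E 0 by [].
exact: (main_mx he hN hn1 hp hOs hOp hly hQ hsig hrE hE).
Qed.
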